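(* Let $\mathcal C$ be a category, $I:\mathcal B\to\mathcal C$ the inclusion of a full subcategory with a left adjoint $S:\mathcal C\to\mathcal B$ (unit $\alpha:1\to IS$, counit $SI\cong1$), and $J:\mathcal D\to\mathcal C$ the inclusion of a full subcategory with a right adjoint $T:\mathcal C\to\mathcal D$ (unit $1\cong TJ$, counit $\epsilon:JT\to1$), and suppose $IS\epsilon:ISJT\to IS$ and $JT\alpha:JT\to JTIS$ are isomorphisms. Then $TI:\mathcal B\to\mathcal D$ is left adjoint to $SJ:\mathcal D\to\mathcal B$, and each of $TI$ and $SJ$ is an equivalence of categories. *)

(* Defs.v *)
(* Morphism
   equality is Leibniz equality. *)

Record Category := {
  Ob : Type;
  Hom : Ob -> Ob -> Type;
  idm : forall x, Hom x x;
  comp : forall x y z, Hom y z -> Hom x y -> Hom x z;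
  comp_id_l : forall x y (f : Hom x y), comp x y y (idm y) f = f;
  comp_id_r : forall x y (f : Hom x y), comp x x y f (idm x) = f;
  comp_assoc : forall w x y z (h : Hom y z) (g : Hom x y) (f : Hom w x),
      comp w x z (comp x y z h g) f = comp w y z h (comp w x y g f)
}.

Arguments idm {C} x : rename.
Arguments comp {C x y z} g f : rename.

Definition is_iso {C : Category} {x y : Ob C} (f : Hom C x y) : Prop :=
  exists g : Hom C y x, comp g f = idm x /\ comp f g = idm y.

Record Functor (C D : Category) := {
  fobj : Ob C -> Ob D;
  fmap : forall x y, Hom C x y -> Hom D (fobj x) (fobj y);
  fmap_id : forall x, fmap x x (idm x) = idm (fobj x);
  fmap_comp : forall x y z (g : Hom C y z) (f : Hom C x y),
      fmap x z (comp g f) = comp (fmap y z g) (fmap x y f)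
}.

Arguments fobj {C D} F x : rename.
Arguments fmap {C D} F {x y} f : rename.

Definition FId (C : Category) : Functor C C.
Proof.
  refine {| fobj := fun x => x; fmap := fun x y f => f |}; reflexivity.
Defined.

(* FComp F G is the composite G o F (first F, then G). *)
Definition FComp {C D E : Category} (F : Functor C D) (G : Functor D E)
  : Functor C E.
Proof.
  refine {| fobj := fun x => fobj G (fobj F x);
            fmap := fun x y f => fmap G (fmap F f) |}.
  - intros x. rewrite (fmap_id _ _ F), (fmap_id _ _ G). reflexivity.
  - intros x y z g f. rewrite (fmap_comp _ _ F), (fmap_comp _ _ G).
    reflexivity.
Defined.

Record NatTrans {C D : Category} (F G : Functor C D) := {
  comp_nt : forall x, Hom D (fobj F x) (fobj G x);
  naturality : forall x y (f : Hom C x y),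
      comp (fmap G f) (comp_nt x) = comp (comp_nt y) (fmap F f)
}.

Arguments comp_nt {C D F G} a x : rename.

Definition nat_iso {C D : Category} {F G : Functor C D} (a : NatTrans F G)
  : Prop := forall x, is_iso (comp_nt a x).

Definition FullSub (C : Category) (P : Ob C -> Prop) : Category.
Proof.
  refine {| Ob := { x : Ob C | P x };
            Hom := fun a b => Hom C (proj1_sig a) (proj1_sig b);
            idm := fun a => idm (proj1_sig a);
            comp := fun a b c g f => comp g f |}.
  - intros; apply comp_id_l.
  - intros; apply comp_id_r.
  - intros; apply comp_assoc.
Defined.

Definition Incl (C : Category) (P : Ob C -> Prop) : Functor (FullSub C P) C.
Proof.
  refine {| fobj := fun a : Ob (FullSub C P) => proj1_sig a;
            fmap := fun (a b : Ob (FullSub C P)) (f : Hom (FullSub C P) a b) => (f : Hom C (proj1_sig a) (proj1_sig b)) |};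
    reflexivity.
Defined.

Record Adjunction {C D : Category} (F : Functor C D) (G : Functor D C) := {
  unit : NatTrans (FId C) (FComp F G);
  counit : NatTrans (FComp G F) (FId D);
  triangle_F : forall x : Ob C,
      comp (comp_nt counit (fobj F x)) (fmap F (comp_nt unit x))
      = idm (fobj F x);
  triangle_G : forall y : Ob D,
      comp (fmap G (comp_nt counit y)) (comp_nt unit (fobj G y))
      = idm (fobj G y)
}.

Arguments unit {C D F G} a : rename.
Arguments counit {C D F G} a : rename.

Definition IsEquivalence {C D : Category} (F : Functor C D) : Prop :=
  exists G : Functor D C,
    (exists a : NatTrans (FComp F G) (FId C), nat_iso a) /\
    (exists b : NatTrans (FComp G F) (FId D), nat_iso b).

(* Main.v *)
Require Import Defs.
From Stdlib Require Import ClassicalEpsilon.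

Theorem corollaryA6 (C : Category) (PB PD : Ob C -> Prop)
  (S : Functor C (FullSub C PB)) (T : Functor C (FullSub C PD))
  (adjS : Adjunction S (Incl C PB))   (* S -| I, unit alpha *)
  (adjT : Adjunction (Incl C PD) T)   (* J -| T, counit epsilon *)
  (HISeps : forall X : Ob C,
      is_iso (fmap (Incl C PB) (fmap S (comp_nt (counit adjT) X))))
  (HJTalpha : forall X : Ob C,
      is_iso (fmap (Incl C PD) (fmap T (comp_nt (unit adjS) X)))) :
  inhabited (Adjunction (FComp (Incl C PB) T) (FComp (Incl C PD) S)) /\
  IsEquivalence (FComp (Incl C PB) T) /\
  IsEquivalence (FComp (Incl C PD) S).
Proof.
  pose proof (naturality _ _ (counit adjS)) as Nb.
  pose proof (naturality _ _ (unit adjS)) as Na.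
  pose proof (triangle_F _ _ adjS) as TF.
  pose proof (triangle_G _ _ adjS) as TG.
  pose proof (naturality _ _ (counit adjT)) as Ne.
  pose proof (naturality _ _ (unit adjT)) as Nn.
  pose proof (triangle_F _ _ adjT) as TFT.
  pose proof (triangle_G _ _ adjT) as TGT.
  pose proof (fun X => constructive_indefinite_description _ (HISeps X)) as HS.
  pose proof (fun X => constructive_indefinite_description _ (HJTalpha X)) as HT.
  cbn in *.
  pose proof (fmap_comp _ _ S) as SC. pose proof (fmap_comp _ _ T) as TC.
  pose proof (fmap_id _ _ S) as SI. pose proof (fmap_id _ _ T) as TI.
  cbn in SC, TC, SI, TI.
  assert (L1 : forall y : Ob (FullSub C PB),
    @comp C _ _ _ (comp_nt (unit adjS) (proj1_sig y)) (comp_nt (counit adjS) y) = idm _).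
  { intros y. etransitivity. apply (Nb y (fobj S (proj1_sig y)) (comp_nt (unit adjS) (proj1_sig y))). apply TF. }
  assert (L2 : forall d : Ob (FullSub C PD),
    @comp C _ _ _ (comp_nt (unit adjT) d) (comp_nt (counit adjT) (proj1_sig d)) = idm _).
  { intros d. etransitivity. symmetry. apply (Nn (fobj T (proj1_sig d)) d (comp_nt (counit adjT) (proj1_sig d))). apply TGT. }
  cbn in L1, L2.
  set (a := comp_nt (unit adjS)) in *.
  set (b := comp_nt (counit adjS)) in *.
  set (n := comp_nt (unit adjT)) in *.
  set (e := comp_nt (counit adjT)) in *.
  pose (sinv := fun X => proj1_sig (HS X)).
  assert (sinvl : forall X, comp (sinv X) (fmap S (e X)) = idm _) by (intro X; exact (proj1 (proj2_sig (HS X)))).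
  assert (sinvr : forall X, comp (fmap S (e X)) (sinv X) = idm _) by (intro X; exact (proj2 (proj2_sig (HS X)))).
  pose (tinv := fun X => proj1_sig (HT X)).
  assert (tinvl : forall X, comp (tinv X) (fmap T (a X)) = idm _) by (intro X; exact (proj1 (proj2_sig (HT X)))).
  assert (tinvr : forall X, comp (fmap T (a X)) (tinv X) = idm _) by (intro X; exact (proj2 (proj2_sig (HT X)))).
  clearbody sinv tinv. clear HS HT HISeps HJTalpha.
  clearbody a b n e.
  cbn in *.
  assert (L3 : forall X, fmap T (e X) = e (proj1_sig (fobj T X))).
  { intro X. cbn. transitivity (comp (fmap T (e X)) (comp (n (fobj T X)) (e (proj1_sig (fobj T X))))).
    - cbn; rewrite L2. rewrite comp_id_r. reflexivity.
    - cbn; rewrite <- comp_assoc. rewrite TGT. apply comp_id_l. }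
  assert (L4 : forall X, fmap S (a X) = a (proj1_sig (fobj S X))).
  { intro X. cbn. transitivity (comp (comp (a (proj1_sig (fobj S X))) (b (fobj S X))) (fmap S (a X))).
    - cbn; rewrite L1. rewrite comp_id_l. reflexivity.
    - cbn; rewrite comp_assoc. rewrite TF. apply comp_id_r. }
  cbn in L3, L4.
  pose (u := fun x : Ob (FullSub C PB) => @comp C _ _ _ (sinv (proj1_sig x)) (a (proj1_sig x))).
  pose (ui := fun x : Ob (FullSub C PB) => @comp C _ _ _ (b x) (fmap S (e (proj1_sig x)))).
  pose (c := fun d : Ob (FullSub C PD) => @comp C _ _ _ (e (proj1_sig d)) (tinv (proj1_sig d))).
  pose (ci := fun d : Ob (FullSub C PD) => @comp C _ _ _ (fmap T (a (proj1_sig d))) (n d)).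
  assert (u_ui : forall x, @comp C _ _ _ (u x) (ui x) = idm _).
  { intro x. unfold u, ui. cbn. rewrite !comp_assoc.
    rewrite <- (comp_assoc C _ _ _ _ (a _) (b x)). rewrite L1, comp_id_l. apply sinvl. }
  assert (ui_u : forall x, @comp C _ _ _ (ui x) (u x) = idm _).
  { intro x. unfold u, ui. cbn. rewrite !comp_assoc.
    rewrite <- (comp_assoc C _ _ _ _ (fmap S _) (sinv _)). rewrite sinvr, comp_id_l. apply TG. }
  assert (c_ci : forall d, @comp C _ _ _ (c d) (ci d) = idm _).
  { intro d. unfold c, ci. cbn. rewrite !comp_assoc.
    rewrite <- (comp_assoc C _ _ _ _ (tinv _) (fmap T _)). rewrite tinvl, comp_id_l. apply TFT. }
  assert (ci_c : forall d, @comp C _ _ _ (ci d) (c d) = idm _).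
  { intro d. unfold c, ci. cbn. rewrite !comp_assoc.
    rewrite <- (comp_assoc C _ _ _ _ (n d) (e _)). rewrite L2, comp_id_l. apply tinvr. }
  assert (Nui : forall x y (f : Hom C (proj1_sig x) (proj1_sig y)),
    @comp C _ _ _ f (ui x) = @comp C _ _ _ (ui y) (fmap S (fmap T f))).
  { intros x y f. unfold ui. cbn. rewrite <- comp_assoc. rewrite Nb.
    rewrite !comp_assoc. rewrite <- SC. rewrite Ne. rewrite SC. reflexivity. }
  assert (Nu : forall x y (f : Hom C (proj1_sig x) (proj1_sig y)),
    @comp C _ _ _ (fmap S (fmap T f)) (u x) = @comp C _ _ _ (u y) f).
  { intros x y f.
    transitivity (@comp C _ _ _ (@comp C _ _ _ (u y) (ui y)) (@comp C _ _ _ (fmap S (fmap T f)) (u x))).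
    - rewrite u_ui. rewrite comp_id_l. reflexivity.
    - rewrite !comp_assoc. rewrite <- (comp_assoc C _ _ _ _ (ui y)). rewrite <- Nui.
      rewrite !comp_assoc. rewrite ui_u, comp_id_r. reflexivity. }
  assert (Nci : forall x y (f : Hom C (proj1_sig x) (proj1_sig y)),
    @comp C _ _ _ (fmap T (fmap S f)) (ci x) = @comp C _ _ _ (ci y) f).
  { intros x y f. unfold ci. cbn. rewrite <- comp_assoc. rewrite <- TC. rewrite Na.
    rewrite TC. rewrite !comp_assoc. rewrite Nn. reflexivity. }
  assert (Nc : forall x y (f : Hom C (proj1_sig x) (proj1_sig y)),
    @comp C _ _ _ f (c x) = @comp C _ _ _ (c y) (fmap T (fmap S f))).
  { intros x y f.
    transitivity (@comp C _ _ _ (@comp C _ _ _ (c y) (ci y)) (@comp C _ _ _ f (c x))).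
    - rewrite c_ci. rewrite comp_id_l. reflexivity.
    - rewrite !comp_assoc. rewrite <- (comp_assoc C _ _ _ _ (ci y)). rewrite <- Nci.
      rewrite !comp_assoc. rewrite ci_c, comp_id_r. reflexivity. }
  assert (K : forall X, @comp C _ _ _ (fmap T (a X)) (e (proj1_sig (fobj T X)))
     = @comp C _ _ _ (fmap T (fmap S (e X))) (fmap T (a (proj1_sig (fobj T X))))).
  { intro X. rewrite <- L3. rewrite <- !TC. rewrite Na. reflexivity. }
  assert (K2 : forall Y, @comp C _ _ _ (a (proj1_sig (fobj S Y))) (fmap S (e Y))
     = @comp C _ _ _ (fmap S (e (proj1_sig (fobj S Y)))) (fmap S (fmap T (a Y)))).
  { intro Y. rewrite <- L4. rewrite <- !SC. rewrite Ne. reflexivity. }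
  assert (TF' : forall x : Ob (FullSub C PB),
    @comp C _ _ _ (c (fobj T (proj1_sig x))) (fmap T (u x)) = idm _).
  { intro x.
    transitivity (@comp C _ _ _ (@comp C _ _ _ (c (fobj T (proj1_sig x))) (fmap T (u x)))
       (@comp C _ _ _ (e (proj1_sig (fobj T (proj1_sig x)))) (n (fobj T (proj1_sig x))))).
    - rewrite TFT, comp_id_r. reflexivity.
    - rewrite <- comp_assoc. unfold c, u. cbn. rewrite TC. rewrite !comp_assoc. rewrite <- (comp_assoc C _ _ _ _ (fmap T (a _)) (e _)). rewrite K. rewrite !comp_assoc.
      rewrite <- (comp_assoc C _ _ _ _ (fmap T (sinv _))). rewrite <- TC, sinvl, TI, comp_id_l.
      rewrite <- (comp_assoc C _ _ _ _ (tinv _)). rewrite tinvl, comp_id_l. apply TFT. }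
  assert (TG' : forall d : Ob (FullSub C PD),
    @comp C _ _ _ (fmap S (c d)) (u (fobj S (proj1_sig d))) = idm _).
  { intro d.
    transitivity (@comp C _ _ _ (@comp C _ _ _ (b (fobj S (proj1_sig d))) (a (proj1_sig (fobj S (proj1_sig d)))))
       (@comp C _ _ _ (fmap S (c d)) (u (fobj S (proj1_sig d))))).
    - rewrite TG, comp_id_l. reflexivity.
    - rewrite comp_assoc. unfold c, u. cbn. rewrite SC. rewrite !comp_assoc.
      rewrite <- (comp_assoc C _ _ _ _ (a _) (fmap S _)). rewrite K2. rewrite !comp_assoc.
      rewrite <- (comp_assoc C _ _ _ _ (fmap S (fmap T _)) (fmap S (tinv _))).
      rewrite <- SC, tinvr, SI, comp_id_l.
      rewrite <- (comp_assoc C _ _ _ _ (fmap S (e _)) (sinv _)). rewrite sinvr, comp_id_l. apply TG. }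
  pose (unitN := @Build_NatTrans (FullSub C PB) (FullSub C PB) (FId _)
     (FComp (FComp (Incl C PB) T) (FComp (Incl C PD) S)) u (fun x y f => Nu x y f)).
  pose (uiN := @Build_NatTrans (FullSub C PB) (FullSub C PB)
     (FComp (FComp (Incl C PB) T) (FComp (Incl C PD) S)) (FId _) ui (fun x y f => Nui x y f)).
  pose (counitN := @Build_NatTrans (FullSub C PD) (FullSub C PD)
     (FComp (FComp (Incl C PD) S) (FComp (Incl C PB) T)) (FId _) c (fun x y f => Nc x y f)).
  split; [| split].
  - constructor. exact (Build_Adjunction _ _ _ _ unitN counitN TF' TG').
  - exists (FComp (Incl C PD) S). split.
    + exists uiN. intro x. exists (u x). exact (conj (u_ui x) (ui_u x)).
    + exists counitN. intro d. exists (ci d). exact (conj (ci_c d) (c_ci d)).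
  - exists (FComp (Incl C PB) T). split.
    + exists counitN. intro d. exists (ci d). exact (conj (ci_c d) (c_ci d)).
    + exists uiN. intro x. exists (u x). exact (conj (u_ui x) (ui_u x)).
Qed.
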